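(* Let $n,d\in\mathbb{N}$, and let $\psi_1:\mathbb{R}^d\to\mathbb{C}$ and $\psi_2:\mathbb{R}^n\to\mathbb{C}$ be characteristic exponents of Lévy processes with Lévy triplets $(b_1,Q_1,\nu_1)$ and $(b_2,Q_2,\nu_2)$. Then \[ \{(x,y)\in\mathbb{R}^d\times\mathbb{R}^n\mid\psi_1(x)+\psi_2(y)=0\}=\{(x,y)\in\mathbb{R}^d\times\mathbb{R}^n\mid \psi_1(x)\in i\mathbb{R},\ \psi_2(y)\in i\mathbb{R},\ b_1^x+b_2^y=0\}. \]
   Context: A characteristic exponent with Lévy triplet $(b,Q,\nu)$ on $\mathbb{R}^k$ is $\psi(\xi)=-ib\cdot\xi+\tfrac12\xi\cdot Q\xi+\int_{0<|z|<1}(1-e^{iz\cdot\xi}+iz\cdot\xi)\nu(dz)+\int_{|z|\ge1}(1-e^{iz\cdot\xi})\nu(dz)$. For such a triplet and $x\in\mathbb{R}^k$, define $b^x:=x\cdot b+\int x\cdot z\big(\mathbf 1_{(0,1)}(|x\cdot z|)-\mathbf 1_{(0,1)}(|z|)\big)\nu(dz)$ (the drift of the one-dimensional Lévy process $x\cdot X_t$). Here $b_1^x$ is built from $(b_1,\nu_1)$ and $b_2^y$ from $(b_2,\nu_2)$. *)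

(* Defs.v *)
From HB Require Import structures.
From mathcomp Require Import all_boot all_order all_algebra.
From mathcomp Require Import all_classical all_reals all_analysis.
From mathcomp Require Import complex.

Set Implicit Arguments.
Unset Strict Implicit.
Unset Printing Implicit Defensive.

Import Order.TTheory GRing.Theory Num.Theory.
Import numFieldNormedType.Exports.
Local Open Scope classical_set_scope.
Local Open Scope ring_scope.

(* R^k is represented by row vectors 'rV[R]_k, equipped with its Borel
   sigma-algebra (generated by the open sets of its usual topology). *)
Definition vecR (R : realType) (k : nat) :=
  g_sigma_algebraType (@open 'rV[R]_k).

Definition dotR (R : realType) (k : nat) (x z : 'rV[R]_k) : R :=
  \sum_(i < k) x ord0 i * z ord0 i.

Definition enorm (R : realType) (k : nat) (z : 'rV[R]_k) : R :=
  Num.sqrt (dotR z z).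

Definition levy_triplet (R : realType) (k : nat) (b : 'rV[R]_k) (Q : 'M[R]_k)
  (nu : {measure set (vecR R k) -> \bar R}) : Prop :=
  [/\ Q^T = Q,
      (forall v : 'rV[R]_k, 0 <= dotR v (v *m Q)),
      nu [set (0 : 'rV[R]_k)] = 0%E &
      (\int[nu]_(z in [set: vecR R k]) (Num.min 1 (enorm z ^+ 2))%:E < +oo)%E].

(* The characteristic exponent psi(xi) of the triplet (b, Q, nu):
   psi(xi) = -i b.xi + 1/2 xi.Q xi
             + int_{0<|z|<1} (1 - e^{i z.xi} + i z.xi) nu(dz)
             + int_{|z|>=1} (1 - e^{i z.xi}) nu(dz),
   written out via its real and imaginary parts. *)
Definition small_jumps (R : realType) (k : nat) : set (vecR R k) :=
  [set z | 0 < enorm z < 1].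
Definition big_jumps (R : realType) (k : nat) : set (vecR R k) :=
  [set z | 1 <= enorm z].

Definition char_exp (R : realType) (k : nat) (b : 'rV[R]_k) (Q : 'M[R]_k)
  (nu : {measure set (vecR R k) -> \bar R}) (xi : 'rV[R]_k) : complex.complex R :=
  complex.Complex
    (2^-1 * dotR xi (xi *m Q)
      + Rintegral nu (@small_jumps R k) (fun z => 1 - cos (dotR z xi))
      + Rintegral nu (@big_jumps R k) (fun z => 1 - cos (dotR z xi)))
    (- dotR b xi
      + Rintegral nu (@small_jumps R k) (fun z => dotR z xi - sin (dotR z xi))
      - Rintegral nu (@big_jumps R k) (fun z => sin (dotR z xi))).

Definition drift_dir (R : realType) (k : nat) (b : 'rV[R]_k)
  (nu : {measure set (vecR R k) -> \bar R}) (x : 'rV[R]_k) : R :=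
  dotR x b + Rintegral nu [set: vecR R k]
    (fun z => dotR x z * (((0 < Num.norm (dotR x z))%R && (Num.norm (dotR x z) < 1)%R)%:R - ((0 < enorm z)%R && (enorm z < 1)%R)%:R)).

(* Main.v *)
Require Import Defs.
From HB Require Import structures.
From mathcomp Require Import all_boot all_order all_algebra.
From mathcomp Require Import all_classical all_reals all_analysis.
From mathcomp Require Import complex.
From mathcomp Require Import measurable_realfun.
From mathcomp Require Import ring lra.
Set Implicit Arguments.
Unset Strict Implicit.
Unset Printing Implicit Defensive.
Import Order.TTheory GRing.Theory Num.Theory.
Import numFieldNormedType.Exports.
Local Open Scope classical_set_scope.
Local Open Scope ring_scope.
Section Dot.
Context (R : realType) (k : nat).
Implicit Types x z : 'rV[R]_k.

Lemma dotRC x z : dotR x z = dotR z x.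
Proof. by rewrite /dotR; apply: eq_bigr => i _; rewrite mulrC. Qed.

Lemma dotR_ge0 z : 0 <= dotR z z.
Proof. by rewrite /dotR; apply: sumr_ge0 => i _; rewrite -expr2 sqr_ge0. Qed.

Lemma dotR_eq0 z : dotR z z = 0 -> z = 0.
Proof.
move=> /eqP; rewrite /dotR psumr_eq0 => [/allP H|i _]; last by rewrite -expr2 sqr_ge0.
apply/rowP => i; rewrite mxE.
have /H : i \in index_enum 'I_k by rewrite mem_index_enum.
by rewrite /= mulf_eq0 orbb => /eqP.
Qed.

Lemma CS x z : dotR z x ^+ 2 <= dotR z z * dotR x x.
Proof.
rewrite /dotR.
set a := fun i => z ord0 i; set b := fun i => x ord0 i.
have -> : \sum_(i < k) z ord0 i * z ord0 i = \sum_(i < k) a i ^+ 2.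
  by apply: eq_bigr => i _; rewrite expr2.
have -> : \sum_(i < k) x ord0 i * x ord0 i = \sum_(i < k) b i ^+ 2.
  by apply: eq_bigr => i _; rewrite expr2.
have -> : \sum_(i < k) z ord0 i * x ord0 i = \sum_(i < k) a i * b i by [].
set P := \sum_(i < k) \sum_(j < k) a i ^+ 2 * b j ^+ 2.
set Q := \sum_(i < k) \sum_(j < k) (a i * b i) * (a j * b j).
have H0 : 0 <= \sum_(i < k) \sum_(j < k) (a i * b j - a j * b i) ^+ 2.
  by apply: sumr_ge0 => i _; apply: sumr_ge0 => j _; exact: sqr_ge0.
have H1 : \sum_(i < k) \sum_(j < k) (a i * b j - a j * b i) ^+ 2 =
   P + \sum_(i < k) \sum_(j < k) (a j ^+ 2 * b i ^+ 2) - 2 * Q.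
  rewrite /P /Q mulr_sumr -big_split -sumrB /=; apply: eq_bigr => i _.
  rewrite mulr_sumr -big_split -sumrB /=; apply: eq_bigr => j _.
  ring.
have H2 : \sum_(i < k) \sum_(j < k) (a j ^+ 2 * b i ^+ 2) = P.
  by rewrite /P exchange_big /=; apply: eq_bigr => i _; apply: eq_bigr => j _; rewrite mulrC.
have H3 : P = (\sum_(i < k) a i ^+ 2) * (\sum_(i < k) b i ^+ 2) by rewrite big_distrlr.
have H4 : Q = (\sum_(i < k) a i * b i) ^+ 2 by rewrite expr2 big_distrlr.
rewrite -H3 -H4; lra.
Qed.
End Dot.
Section Real.
Context (R : realType).

Lemma abs_sin_le_pos (u : R) : 0 <= u -> `|sin u| <= u.
Proof.
move=> u0.
have [c _ /=] := @MVT_segment R sin cos 0 u u0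
  (fun x _ => is_derive_sin x) (continuous_subspaceT (@continuous_sin R)).
rewrite sin0 subr0 subr0 => ->.
by rewrite normrM (ger0_norm u0) ler_piMl // cos_max.
Qed.

Lemma abs_sin_le (u : R) : `|sin u| <= `|u|.
Proof.
have [u0|u0] := leP 0 u; first by rewrite (ger0_norm u0) abs_sin_le_pos.
by rewrite (ltr0_norm u0) -normrN -sinN abs_sin_le_pos // oppr_ge0 ltW.
Qed.

Lemma one_cos_le_pos (t : R) : 0 <= t -> 1 - cos t <= t ^+ 2.
Proof.
move=> t0.
have [c ] := @MVT_segment R cos (fun x => - sin x) 0 t t0
  (fun x _ => is_derive_cos x) (continuous_subspaceT (@continuous_cos R)).
rewrite in_itv /= => /andP[c0 ct] E.
have -> : 1 - cos t = sin c * t.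
  by rewrite -cos0 -opprB E subr0 mulNr opprK.
rewrite expr2 ler_wpM2r //.
by rewrite (le_trans (ler_norm _)) // (le_trans (abs_sin_le _)) // ger0_norm.
Qed.

Lemma one_cos_le (t : R) : 1 - cos t <= t ^+ 2.
Proof.
have [t0|t0] := leP 0 t; first exact: one_cos_le_pos.
by rewrite -cosN -sqrrN one_cos_le_pos // oppr_ge0 ltW.
Qed.

Lemma cos1_small (t : R) : cos t = 1 -> ~~ ((0 < `|t|) && (`|t| < 1)).
Proof.
move=> ct; apply/negP => /andP[t0 t1].
have : cos `|t| = 1 by rewrite cos_norm.
have -> : `|t| = (`|t| / 2) *+ 2 by rewrite -mulr_natr divfK.
rewrite cos_mulr2n cos2sin2.
have : 0 < sin (`|t| / 2).
  apply: sin_gt0_pi; apply/andP; split; first by rewrite divr_gt0.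
  apply: (@lt_le_trans _ _ 2); last exact: pi_ge2.
  rewrite ltr_pdivrMr //; lra.
move=> s0 E.
have : sin (`|t| / 2) ^+ 2 = 0 by move: E; set s := sin _ ^+ 2; lra.
by move/eqP; rewrite sqrf_eq0 => /eqP s00; move: s0; rewrite s00 ltxx.
Qed.

Lemma cos1_sin0 (t : R) : cos t = 1 -> sin t = 0.
Proof. by move=> ct; apply: cos1sin0; rewrite ct normr1. Qed.

End Real.

Section Meas.
Context (R : realType) (k : nat).
Local Notation V := (vecR R k).

Lemma mcont (f : 'rV[R]_k -> R) : continuous f -> measurable_fun setT (f : V -> R).
Proof.
move=> cf; apply: (measurability _ (RGenOInfty.measurableE R)).
move=> /= _ [_ [a ->] <-]; rewrite setTI.
apply: sub_sigma_algebra.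
apply: open_comp; first by move=> y _; exact: cf.
by apply: itv_open_ends_open; rewrite /itv_open_ends; constructor.
Qed.

Lemma mcoord i : measurable_fun setT (fun z : V => z ord0 i).
Proof. by apply: mcont; exact: coord_continuous. Qed.

Lemma mdot (x : 'rV[R]_k) : measurable_fun setT (fun z : V => dotR z x).
Proof.
rewrite /dotR; apply: measurable_sum => i.
by apply: measurable_funM; [exact: mcoord|exact: measurable_cst].
Qed.

Lemma mdotzz : measurable_fun setT (fun z : V => dotR z z).
Proof.
rewrite /dotR; apply: measurable_sum => i.
by apply: measurable_funM; exact: mcoord.
Qed.

Lemma menorm : measurable_fun setT (fun z : V => enorm z).
Proof.
rewrite /enorm.
have := measurableT_comp (continuous_measurable_fun (@sqrt_continuous R)) (@mdotzz).
by apply: eq_measurable_fun => z _.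
Qed.

Lemma mS : measurable (@small_jumps R k).
Proof.
have -> : @small_jumps R k = (fun z : V => enorm z) @^-1` `]0, 1[.
  by apply/seteqP; split => z; rewrite /= in_itv.
by rewrite -[X in measurable X]setTI; apply: menorm => //; exact: measurable_itv.
Qed.

Lemma mB : measurable (@big_jumps R k).
Proof.
have -> : @big_jumps R k = (fun z : V => enorm z) @^-1` `[1, +oo[.
  by apply/seteqP; split => z; rewrite /= in_itv /= andbT.
by rewrite -[X in measurable X]setTI; apply: menorm => //; exact: measurable_itv.
Qed.

Lemma m0 : measurable [set (0 : V)].
Proof.
have -> : [set (0 : V)] = (fun z : V => dotR z z) @^-1` [set 0].
  apply/seteqP; split => z /=; first by move=> ->; rewrite /dotR big1 // => i _; rewrite mxE mulr0.
  exact: dotR_eq0.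
by rewrite -[X in measurable X]setTI; apply: mdotzz => //.
Qed.

End Meas.

Lemma fineN_sub (R : realType) (a b : \bar R) : fine (a - b)%E = - fine (b - a)%E.
Proof. by case: a => [a| |]; case: b => [b| |] //=; rewrite ?opprB ?oppr0. Qed.

Lemma RintegralN (d : measure_display) (T : measurableType d) (R : realType)
  (mu : {measure set T -> \bar R}) (D : set T) (g : T -> R) :
  Rintegral mu D (fun z => - g z) = - Rintegral mu D g.
Proof.
rewrite /Rintegral.
under eq_integral do rewrite EFinN.
rewrite integralE [in RHS]integralE.
have -> : (fun z => - (g z)%:E)%E = (\- (fun z => (g z)%:E))%E by [].
by rewrite funeposN funenegN fineN_sub.
Qed.

Section Triplet.
Context (R : realType) (k : nat) (b : 'rV[R]_k) (Q : 'M[R]_k)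
  (nu : {measure set (vecR R k) -> \bar R}) (hT : levy_triplet b Q nu) (x : 'rV[R]_k).
Local Notation V := (vecR R k).
Let h := fun z : V => 1 - cos (dotR z x).
Let m := fun z : V => Num.min 1 (enorm z ^+ 2).

Lemma h_ge0 z : 0 <= h z.
Proof. by rewrite /h subr_ge0 cos_le1. Qed.

Lemma h_bound z : h z <= (2 + dotR x x) * m z.
Proof.
rewrite /h /m.
have xx0 := dotR_ge0 x.
have e2 : enorm z ^+ 2 = dotR z z by rewrite /enorm sqr_sqrtr // dotR_ge0.
have cs := CS x z. have oc := one_cos_le (dotR z x). have cg := cos_geN1 (dotR z x).
have zz0 := dotR_ge0 z.
rewrite /Order.min; case: ifPn => H.
- lra.
- rewrite -leNgt e2 in H *; nra.
Qed.

Lemma mh : measurable_fun setT h.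
Proof.
apply: measurable_funB; first exact: measurable_cst.
exact: measurableT_comp (continuous_measurable_fun (@continuous_cos R)) (mdot x).
Qed.

Lemma mm : measurable_fun setT m.
Proof.
apply: measurable_minr; first exact: measurable_cst.
exact: measurable_funX (@menorm R k).
Qed.

Lemma int_h_fin D : measurable D -> (\int[nu]_(z in D) (h z)%:E < +oo)%E.
Proof.
move=> mD.
have [_ _ _ Hfin] := hT.
have mCm : measurable_fun setT (fun z => ((2 + dotR x x)%:E * (m z)%:E)%E).
  under eq_fun do rewrite -EFinM.
  by apply/measurable_EFinP; apply: measurable_funM => //; exact: mm.
have C0 : 0 <= 2 + dotR x x by have := dotR_ge0 x; lra.
have m0 z : 0 <= m z by rewrite /m le_min ler01 sqr_ge0.
apply: (@le_lt_trans _ _ (\int[nu]_(z in D) ((2 + dotR x x)%:E * (m z)%:E))%E).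
  apply: ge0_le_integral => //.
  - by move=> z _; rewrite lee_fin; exact: h_ge0.
  - by apply/measurable_EFinP; exact: measurable_funS mh.
  - exact: measurable_funS mCm.
  - by move=> z _; rewrite -EFinM lee_fin; exact: h_bound.
apply: (@le_lt_trans _ _ (\int[nu]_(z in setT) ((2 + dotR x x)%:E * (m z)%:E))%E).
  apply: ge0_subset_integral => //.
  by move=> z _; rewrite -EFinM lee_fin mulr_ge0.
rewrite ge0_integralZl_EFin //.
- by apply: lte_mul_pinfty => //; rewrite lee_fin.
- by move=> z _; rewrite lee_fin.
- by apply/measurable_EFinP; exact: mm.
Qed.

Lemma re_ge0 : 0 <= complex.Re (char_exp b Q nu x).
Proof.
have [_ psd _ _] := hT.
rewrite /char_exp /=.
apply: addr_ge0; first apply: addr_ge0.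
- by apply: mulr_ge0; [rewrite invr_ge0 ler0n|exact: psd].
- by apply: Rintegral_ge0 => z _; exact: h_ge0.
- by apply: Rintegral_ge0 => z _; exact: h_ge0.
Qed.

End Triplet.

Lemma mbool (R : realType) (d : measure_display) (T : measurableType d) (P : T -> bool) :
  measurable_fun setT P -> measurable_fun setT (fun z => (P z)%:R : R).
Proof.
move=> mP.
have -> : (fun z => (P z)%:R : R) = \1_(P @^-1` [set true]).
  apply/funext => z; rewrite indicE; congr (_%:R).
  case: (boolP (P z)) => Pz; first by rewrite mem_set.
  suff -> : (z \in P @^-1` [set true]) = false by [].
  by apply/negbTE/negP => /set_mem /=; rewrite (negbTE Pz).
apply: measurable_indic.
by rewrite -[X in measurable X]setTI; apply: mP.
Qed.

Lemma ae_mono (d : measure_display) (T : measurableType d) (R : realType)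
  (mu : {measure set T -> \bar R}) (P Q : T -> Prop) :
  (forall z, P z -> Q z) -> (\forall z \ae mu, P z) -> \forall z \ae mu, Q z.
Proof.
move=> PQ [N [mN N0 sub]]; exists N; split => // z /= nQ.
by apply: sub => /=; apply: contra_not nQ; exact: PQ.
Qed.

Section Triplet2.
Context (R : realType) (k : nat) (b : 'rV[R]_k) (Q : 'M[R]_k)
  (nu : {measure set (vecR R k) -> \bar R}) (hT : levy_triplet b Q nu) (x : 'rV[R]_k).
Local Notation V := (vecR R k).

Lemma ae_cos1 : complex.Re (char_exp b Q nu x) = 0 ->
  \forall z \ae nu, cos (dotR z x) = 1.
Proof.
have [_ psd nu0 _] := hT.
pose h := fun z : V => 1 - cos (dotR z x).
have q0 : 0 <= 2^-1 * dotR x (x *m Q) by apply: mulr_ge0; [rewrite invr_ge0 ler0n|exact: psd].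
have RS0 := Rintegral_ge0 nu (D := @small_jumps R k) (f := h) (fun z _ => h_ge0 x z).
have RB0 := Rintegral_ge0 nu (D := @big_jumps R k) (f := h) (fun z _ => h_ge0 x z).
rewrite /char_exp /= -/h => Re0.
have key D : measurable D -> Rintegral nu D h = 0 -> ae_eq nu D (EFin \o h) (cst 0%E).
  move=> mD; rewrite /Rintegral => I0.
  have fin := int_h_fin hT x mD.
  have ge0 : (0 <= \int[nu]_(z in D) (h z)%:E)%E.
    by apply: integral_ge0 => z _; rewrite lee_fin; exact: h_ge0.
  have I0' : (\int[nu]_(z in D) (h z)%:E = 0)%E.
    by rewrite -[LHS]fineK ?ge0_fin_numE // I0.
  apply/(ae_eq_integral_abs nu mD (f := EFin \o h)).
    by apply/measurable_EFinP; exact: measurable_funS (mh x).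
  rewrite -I0'; apply: eq_integral => z _ /=.
  by rewrite ger0_norm // h_ge0.
have aeS := key _ (@mS R k) (ltac:(lra)).
have aeB := key _ (@mB R k) (ltac:(lra)).
have ae0 : \forall z \ae nu, z != 0.
  exists [set 0]; split => //; first exact: m0.
  by move=> z /= /negP; rewrite negbK => /eqP.
apply: filterS3 aeS aeB ae0 => z HS HB z0.
suff : h z = 0 by rewrite /h; lra.
have [Sz|nSz] := pselect (@small_jumps R k z).
  by have := HS Sz => -[].
suff Bz : @big_jumps R k z by have := HB Bz => -[].
rewrite /big_jumps /=; rewrite /small_jumps /= in nSz.
rewrite leNgt; apply/negP => e1; apply: nSz; rewrite e1 andbT.
rewrite lt_neqAle sqrtr_ge0 andbT eq_sym; apply/negP => /eqP.
move=> /eqP; rewrite sqrtr_eq0 => zz.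
have : dotR z z = 0 by apply/eqP; rewrite eq_le zz dotR_ge0.
by move/dotR_eq0 => z00; move: z0; rewrite z00 eqxx.
Qed.


Lemma im_eq : complex.Re (char_exp b Q nu x) = 0 ->
  complex.Im (char_exp b Q nu x) = - drift_dir b nu x.
Proof.
move=> /ae_cos1 aec.
rewrite /char_exp /drift_dir /=.
have mt : measurable_fun setT (fun z : V => dotR z x) := mdot x.
have mt' : measurable_fun setT (fun z : V => dotR x z).
  by apply: eq_measurable_fun mt => z _; rewrite dotRC.
have ms : measurable_fun setT (fun z : V => sin (dotR z x)).
  exact: measurableT_comp (continuous_measurable_fun (@continuous_sin R)) mt.
have E1 : Rintegral nu (@small_jumps R k) (fun z => dotR z x - sin (dotR z x))
        = Rintegral nu (@small_jumps R k) (fun z => dotR z x).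
  rewrite /Rintegral; congr fine.
  apply: (@ae_eq_integral _ _ _ nu _ (fun z => (dotR z x)%:E)).
  - exact: mS.
  - by apply/measurable_EFinP; apply: measurable_funS (measurable_funB mt ms).
  - by apply/measurable_EFinP; exact: measurable_funS mt.
  - by apply: ae_mono aec => z c1 _; rewrite cos1_sin0 // subr0.
have E2 : Rintegral nu (@big_jumps R k) (fun z => sin (dotR z x)) = 0.
  rewrite /Rintegral (ae_eq_integral (cst 0%E)) ?integral0 //.
  - exact: mB.
  - by apply/measurable_EFinP; exact: measurable_funS ms.
  - by apply: ae_mono aec => z c1 _; rewrite /= cos1_sin0.
have mb1 : measurable_fun setT
    (fun z : V => (0 < `|dotR x z|) && (`|dotR x z| < 1)).
  have ma : measurable_fun setT (fun z : V => `|dotR x z|).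
    exact: measurableT_comp (@normr_measurable R setT) mt'.
  by apply: measurable_and; apply: measurable_fun_ltr => //; exact: measurable_cst.
have mb2 : measurable_fun setT
    (fun z : V => (0 < enorm z) && (enorm z < 1)).
  have ma := @menorm R k.
  by apply: measurable_and; apply: measurable_fun_ltr => //; exact: measurable_cst.
have E3 : Rintegral nu setT (fun z : V => dotR x z *
     (((0 < `|dotR x z|) && (`|dotR x z| < 1))%:R - ((0 < enorm z) && (enorm z < 1))%:R))
   = - Rintegral nu (@small_jumps R k) (fun z => dotR z x).
  rewrite (Rintegral_mkcond _ (@small_jumps R k)) -RintegralN.
  rewrite /Rintegral; congr fine.
  apply: ae_eq_integral => //.
  - apply/measurable_EFinP; apply: measurable_funM => //.
    by apply: measurable_funB; exact: mbool.
  - apply/measurable_EFinP; apply: measurable_funN.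
    apply/(measurable_restrictT (fun z : V => dotR z x) (@mS R k)).
    exact: measurable_funS mt.
  - apply: ae_mono aec => z c1 _.
    have := cos1_small c1; rewrite -dotRC => /negbTE ->.
    rewrite patchE /=; case: ifPn => Sz.
      move: Sz; rewrite inE /small_jumps /= => ->.
      by rewrite dotRC sub0r mulrN1.
    have -> : ((0 < enorm z) && (enorm z < 1)) = false.
      apply/negbTE; apply: contra Sz => Sz; exact: mem_set.
    by rewrite subrr mulr0 oppr0.
rewrite E1 E2 E3 dotRC subr0 opprD opprK.
by [].
Qed.

End Triplet2.


Lemma aux (R : realType) (u v : complex.complex R) (d1 d2 : R) :
  0 <= complex.Re u -> 0 <= complex.Re v ->
  (complex.Re u = 0 -> complex.Im u = - d1) ->
  (complex.Re v = 0 -> complex.Im v = - d2) ->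
  (u + v = 0) = [/\ complex.Re u = 0, complex.Re v = 0 & d1 + d2 = 0].
Proof.
case: u => a1 c1; case: v => a2 c2 /= r1 r2 i1 i2.
have -> : ((a1 +i* c1) + (a2 +i* c2) = (a1 + a2) +i* (c1 + c2))%C by [].
apply: propext; split.
- case=> E1 E2.
  have A1 : a1 = 0 by lra.
  have A2 : a2 = 0 by lra.
  split => //; have := i1 A1; have := i2 A2; lra.
- case=> A1 A2 D.
  have := i1 A1; have := i2 A2 => I2 I1.
  have -> : a1 + a2 = 0 by lra.
  have -> : c1 + c2 = 0 by lra.
  by [].
Qed.

Unset Implicit Arguments.

Theorem lemma5p3 (R : realType) (n d : nat)
  (b1 : 'rV[R]_d) (Q1 : 'M[R]_d) (nu1 : {measure set (vecR R d) -> \bar R})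
  (b2 : 'rV[R]_n) (Q2 : 'M[R]_n) (nu2 : {measure set (vecR R n) -> \bar R}) :
  levy_triplet b1 Q1 nu1 -> levy_triplet b2 Q2 nu2 ->
  [set xy : 'rV[R]_d * 'rV[R]_n |
     char_exp b1 Q1 nu1 xy.1 + char_exp b2 Q2 nu2 xy.2 = 0] =
  [set xy : 'rV[R]_d * 'rV[R]_n |
     [/\ complex.Re (char_exp b1 Q1 nu1 xy.1) = 0,
         complex.Re (char_exp b2 Q2 nu2 xy.2) = 0 &
         drift_dir b1 nu1 xy.1 + drift_dir b2 nu2 xy.2 = 0]].
Proof.
move=> h1 h2.
apply: funext => -[x y].
exact: (aux (re_ge0 h1 x) (re_ge0 h2 y) (im_eq h1 (x := x)) (im_eq h2 (x := y))).
Qed.
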